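(* Let $m\geq 2$ and $n\geq 2$ be integers, let $G_m$ be a graph of order $m$ and $H_n$ a graph of order $n$. Then $rvc(G_m \diamond H_n) \geq rvc(G_m)$.
   Context: All graphs are finite, simple, connected and undirected; $d$ denotes graph distance. For a graph $G$ and $k\in\mathbb{N}$, a rainbow vertex $k$-coloring of $G$ is a map $c:V(G)\to\{1,\dots,k\}$ such that every two vertices $u,v$ are joined by a path whose internal vertices all receive distinct colors (a rainbow vertex path). The rainbow vertex connection number $rvc(G)$ is the least $k$ for which $G$ has a rainbow vertex $k$-coloring. For graphs $G_m$ (order $m$) and $H_n$ (order $n$) on disjoint vertex sets, the edge corona $G_m\diamond H_n$ is obtained from one copy of $G_m$ and $|E(G_m)|$ vertex-disjoint copies of $H_n$, one copy for each edge of $G_m$, by joining the two end vertices of the $j$-th edge of $G_m$ to every vertex of the $j$-th copy of $H_n$, for each $j\in\{1,\dots,|E(G_m)|\}$. *)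

(* Defs.v *)
From mathcomp Require Import all_boot.
Set Implicit Arguments. Unset Strict Implicit. Unset Printing Implicit Defensive.

Definition simple_graph (T : finType) (e : rel T) : Prop :=
  symmetric e /\ irreflexive e.

Definition connected_graph (T : finType) (e : rel T) : Prop :=
  forall x y : T, connect e x y.

(* A path from u to v: the sequence u :: p is an e-path without repeated
   vertices ending at v; its internal vertices are those strictly between. *)
Definition internal (T : Type) (u : T) (p : seq T) : seq T := behead (belast u p).

Definition rainbow_vertex_path (T : finType) (e : rel T) (c : T -> nat)
    (u v : T) (p : seq T) : Prop :=
  [/\ path e u p, last u p = v, uniq (u :: p) & uniq (map c (internal u p))].

Definition rv_coloring (T : finType) (e : rel T) (k : nat) (c : T -> nat) : Prop :=
  (forall x, 1 <= c x <= k) /\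
  (forall u v : T, exists p, rainbow_vertex_path e c u v p).

Definition rv_colorable (T : finType) (e : rel T) (k : nat) : Prop :=
  exists c : T -> nat, rv_coloring e k c.

Definition is_rvc (T : finType) (e : rel T) (k : nat) : Prop :=
  rv_colorable e k /\ forall j, rv_colorable e j -> k <= j.

Definition is_edge (T : finType) (e : rel T) (s : {set T}) : bool :=
  [exists x, exists y, e x y && (s == [set x; y])].

Definition edge_type (T : finType) (e : rel T) : finType :=
  {s : {set T} | is_edge e s}.

(* Vertices of the edge corona: the vertices of G, plus for each edge s of G
   a copy of V(H) (vertices (s, h)). *)
Definition ec_vertex (TG : finType) (eG : rel TG) (TH : finType) : finType :=
  (TG + (edge_type eG * TH))%type.

Definition edge_corona (TG : finType) (eG : rel TG) (TH : finType) (eH : rel TH)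
  : rel (ec_vertex eG TH) :=
  fun a b =>
    match a, b with
    | inl x, inl y => eG x y
    | inr (s, h), inr (s', h') => (s == s') && eH h h'
    | inl x, inr (s, _) => x \in val s
    | inr (s, _), inl y => y \in val s
    end.
Arguments edge_corona {TG} eG {TH} eH.

(* Main.v *)
Require Import Defs.
From mathcomp Require Import all_boot.
Set Implicit Arguments. Unset Strict Implicit.

Section Aux.
Variables (TG TH : finType) (eG : rel TG) (eH : rel TH).
Local Notation V := (ec_vertex eG TH).
Local Notation E := (edge_corona eG eH).

Definition getl (a : V) : option TG := if a is inl x then Some x else None.
Definition proj (s : seq V) : seq TG := pmap getl s.

Lemma getlK : ocancel getl inl.
Proof. by case. Qed.

Lemma edge_in (s : edge_type eG) x y : symmetric eG ->
  x \in val s -> y \in val s -> x != y -> eG x y.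
Proof.
move=> sym; case: s => s /= /existsP [x' /existsP [y' /andP [exy /eqP ->]]].
rewrite !inE => /orP [] /eqP -> /orP [] /eqP -> //; by rewrite ?eqxx // sym.
Qed.

Lemma proj_path : symmetric eG -> forall p (a : V) x,
  path E a p ->
  (a = inl x \/ exists s h, a = inr (s, h) /\ x \in val s) ->
  inl x \notin p -> uniq p -> path eG x (proj p).
Proof.
move=> sym; elim=> [|b p IH] a x //= /andP [Eab Hp] Ha.
rewrite inE negb_or => /andP [nxb nxp] /andP [nbp up].
case: b Eab Hp nxb nbp => [y|[s' h']] Eab Hp nxb nbp.
- rewrite /proj /= -/(proj p); apply/andP; split.
    case: Ha Eab => [->|[s [h [-> xs]]]] // Eab.
    have nxy : x != y by apply: contra nxb => /eqP ->.
    exact: (edge_in sym xs Eab nxy).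
  by apply: (IH (inl y)) => //; left.
- rewrite /proj /= -/(proj p); apply: (IH (inr (s', h'))) => //.
  right; exists s', h'; split => //.
  case: Ha Eab => [->|[s [h [-> xs]]]] //= /andP [/eqP <-] //.
Qed.

Lemma proj_uniq_col (c : V -> nat) s :
  uniq (map c s) -> uniq (map (fun x => c (inl x)) (proj s)).
Proof.
move=> u.
have -> : map (fun x => c (inl x)) (proj s) = map c (map inl (proj s)).
  by rewrite -map_comp.
rewrite /proj (pmap_filter getlK).
apply: subseq_uniq u; apply: map_subseq; exact: filter_subseq.
Qed.

End Aux.

Theorem theorem2 (m n : nat) (TG TH : finType) (eG : rel TG) (eH : rel TH) :
  2 <= m -> 2 <= n -> #|TG| = m -> #|TH| = n ->
  simple_graph eG -> connected_graph eG ->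
  simple_graph eH -> connected_graph eH ->
  forall a b : nat, is_rvc (edge_corona eG eH) a -> is_rvc eG b -> b <= a.
Proof.
move=> _ _ _ _ [sym _] _ _ _ a b [[c [cr cp]] _] [_ bmin].
apply: bmin; exists (fun x => c (inl x)); split; first by move=> x; exact: cr.
move=> u v; have [p [Hp Hl Hu Hi]] := cp (inl u) (inl v).
case/lastP: p Hp Hl Hu Hi => [|p z] Hp Hl Hu Hi.
  exists [::]; case: Hl => ->; split => //.
rewrite last_rcons in Hl; subst z.
have pr : proj (rcons p (inl v)) = rcons (proj p) v.
  by rewrite /proj -cats1 pmap_cat cats1.
exists (rcons (proj p) v); split.
- rewrite -pr; apply: (proj_path sym Hp); first by left.
    by case/andP: Hu.
  by case/andP: Hu.
- by rewrite last_rcons.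
- have := pmap_uniq (getlK (eG:=eG) (TH:=TH)) Hu; by rewrite -pr.
- move: Hi; rewrite /internal !belast_rcons /=; exact: proj_uniq_col.
Qed.
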